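(* Let $(A,B,E)$ be a finite bipartite graph and let $\alpha\in(0,1)$. Let $T\subseteq A$ be $\alpha$-separable, i.e., there exist $S\subseteq B$ with $|S|\ge\alpha|B|$ and disjoint subsets $T_0',T_1'\subseteq T$ with $|T_0'|\ge\alpha|T|$, $|T_1'|\ge\alpha|T|$ and $|d(S,T_0')-d(S,T_1')|\ge\alpha$. Then there are $S\subseteq B$ with $|S|\geq \alpha|B|$, subsets $T_0,T_1 \subseteq T$ with $|T_0|,|T_1| \ge \frac12\alpha^2|T|$, and real numbers $d_0,d_1$ with $d_1-d_0 \geq\frac{\alpha}{4}|S|$, such that every $h\in T_0$ satisfies $e(h,S)\leq d_0$ and every $h \in T_1$ satisfies $e(h,S)\geq d_1$.
   Context: For a bipartite graph $(A,B,E)$ and sets $S\subseteq B$, $T\subseteq A$, $e(S,T)$ (also written $e(T,S)$) denotes the number of edges with one endpoint in $S$ and the other in $T$; for a single vertex $h$ we write $e(h,S)=e(\{h\},S)$. The density is $d(S,T)=\frac{e(S,T)}{|S||T|}$. *)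

(* Defs.v *)
From HB Require Import structures.
From mathcomp Require Import all_boot all_order all_algebra.
Set Implicit Arguments. Unset Strict Implicit. Unset Printing Implicit Defensive.
Import Order.TTheory GRing.Theory Num.Theory.
Local Open Scope ring_scope.

Definition ecount (A B : finType) (E : A -> B -> bool) (S : {set B}) (T : {set A}) : nat :=
  #|[set p : A * B | [&& p.1 \in T, p.2 \in S & E p.1 p.2]]|.

Definition evert (A B : finType) (E : A -> B -> bool) (h : A) (S : {set B}) : nat :=
  ecount E S [set h].

Definition density (R : realFieldType) (A B : finType) (E : A -> B -> bool)
  (S : {set B}) (T : {set A}) : R :=
  (ecount E S T)%:R / (#|S| * #|T|)%:R.

Definition separable (R : realFieldType) (A B : finType) (E : A -> B -> bool)
  (alpha : R) (T : {set A}) : Prop :=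
  exists (S : {set B}) (T0 T1 : {set A}),
    alpha * #|B|%:R <= #|S|%:R /\
        T0 \subset T /\ T1 \subset T /\ [disjoint T0 & T1] /\
        alpha * #|T|%:R <= #|T0|%:R /\
        alpha * #|T|%:R <= #|T1|%:R /\
        alpha <= `|density R E S T0 - density R E S T1|.

(* Main.v *)
Require Import Defs.
From HB Require Import structures.
From mathcomp Require Import all_boot all_order all_algebra.
Import Order.TTheory GRing.Theory Num.Theory.
Local Open Scope ring_scope.
From mathcomp Require Import ring lra.
Lemma ecount_sum (A B : finType) (E : A -> B -> bool) (S : {set B}) (U : {set A}) :
  ecount E S U = (\sum_(h in U) evert E h S)%N.
Proof.
rewrite /evert /ecount.
have cs : forall V : {set A}, #|[set p : A * B | [&& p.1 \in V, p.2 \in S & E p.1 p.2]]| =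
   (\sum_(a in V) #|[set b | (b \in S) && E a b]|)%N.
  move=> V; rewrite -sum1_card.
  rewrite (eq_bigl (fun p : A * B => (p.1 \in V) && ((p.2 \in S) && E p.1 p.2))); last by move=> p; rewrite inE.
  rewrite -(pair_big_dep (fun a => a \in V) (fun a b => (b \in S) && E a b) (fun _ _ => 1%N)) /=.
  by apply: eq_bigr => a _; rewrite sum1_card; apply: eq_card => b; rewrite inE.
rewrite cs; apply: eq_bigr => h hU; rewrite cs big_set1 //.
Qed.
Lemma evert_eq (A B : finType) (E : A -> B -> bool) (S : {set B}) h :
  evert E h S = #|[set b | (b \in S) && E h b]|.
Proof.
rewrite /evert ecount_sum big_set1 /evert /ecount -sum1_card.
rewrite (eq_bigl (fun p : A * B => (p.1 \in [set h]) && ((p.2 \in S) && E p.1 p.2))); last by move=> p; rewrite inE.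
rewrite -(pair_big_dep (fun a => a \in [set h]) (fun a b => (b \in S) && E a b) (fun _ _ => 1%N)) /=.
by rewrite big_set1 sum1_card; apply: eq_card => b; rewrite inE.
Qed.
Lemma evert_le (A B : finType) (E : A -> B -> bool) (S : {set B}) h : (evert E h S <= #|S|)%N.
Proof. by rewrite evert_eq; apply: subset_leq_card; apply/subsetP => b; rewrite inE => /andP[]. Qed.

Lemma markov (A : finType) (R : realFieldType) (U : {set A}) (g : A -> R) (a c : R) :
 (forall h, h \in U -> 0 <= g h) -> \sum_(h in U) g h <= #|U|%:R * a ->
 #|U|%:R * c <= #|[set h in U | g h <= a + c]|%:R * (a + c).
Proof.
move=> g0 hs.
have e1 : #|[set h in U | g h <= a + c]|%:R = \sum_(h in U) (if g h <= a + c then 1 else 0) :> R.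
  rewrite -big_mkcondr /= -sum1_card natr_sum; apply: eq_bigl => h; by rewrite inE.
have e2 : #|U|%:R = \sum_(h in U) 1 :> R by rewrite -sum1_card natr_sum.
have : \sum_(h in U) (c - (a + c) * (if g h <= a + c then 1 else 0)) <= \sum_(h in U) (g h - a).
  apply: ler_sum => h hU; have := g0 h hU; case: ifP => hg; lra.
rewrite !sumrB -!mulr_sumr -e1.
have -> : \sum_(h in U) c = #|U|%:R * c by rewrite e2 mulr_suml; apply: eq_bigr => *; rewrite mul1r.
have -> : \sum_(h in U) a = #|U|%:R * a by rewrite e2 mulr_suml; apply: eq_bigr => *; rewrite mul1r.
move: hs; lra.
Qed.

Lemma key (R : realFieldType) (A B : finType) (E : A -> B -> bool)
  (alpha : R) (T : {set A}) (S : {set B}) (U0 U1 : {set A}) :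
  0 < alpha -> alpha < 1 -> alpha * #|B|%:R <= #|S|%:R ->
  U0 \subset T -> U1 \subset T -> alpha * #|T|%:R <= #|U0|%:R ->
  alpha * #|T|%:R <= #|U1|%:R ->
  alpha <= density R E S U1 - density R E S U0 ->
  exists (S : {set B}) (T0 T1 : {set A}) (d0 d1 : R),
    alpha * #|B|%:R <= #|S|%:R /\
        T0 \subset T /\ T1 \subset T /\
        2^-1 * alpha ^+ 2 * #|T|%:R <= #|T0|%:R /\
        2^-1 * alpha ^+ 2 * #|T|%:R <= #|T1|%:R /\
        alpha / 4%:R * #|S|%:R <= d1 - d0 /\
        (forall h, h \in T0 -> (evert E h S)%:R <= d0) /\
        (forall h, h \in T1 -> d1 <= (evert E h S)%:R).
Proof.
move=> ha0 ha1 hS sU0 sU1 hn0 hn1 hd.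
pose f h : R := (evert E h S)%:R.
pose s : R := #|S|%:R.
have f0 h : 0 <= f h by rewrite /f ler0n.
have fs h : f h <= s by rewrite /f /s ler_nat evert_le.
have dens (U : {set A}) : density R E S U = (\sum_(h in U) f h) / (s * #|U|%:R).
  by rewrite /density ecount_sum natr_sum natrM.
have Tpos : (0 < #|T|)%N.
  rewrite lt0n; apply/negP => /eqP T0.
  have z (U : {set A}) : U \subset T -> #|U| = 0%N.
    by move=> sU; have := subset_leq_card sU; rewrite T0 leqn0 => /eqP.
  move: hd; rewrite !dens (z _ sU0) (z _ sU1) !mulr0 invr0 !mulr0; lra.
have Tpos' : 0 < #|T|%:R :> R by rewrite ltr0n.
have n0p : 0 < #|U0|%:R :> R by nra.
have n1p : 0 < #|U1|%:R :> R by nra.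
have spos : 0 < s.
  rewrite /s ltr0n lt0n; apply/negP => /eqP S0.
  move: hd; rewrite !dens /s S0 !mul0r invr0 !mulr0; lra.
pose a (U : {set A}) := (\sum_(h in U) f h) / #|U|%:R.
have aE (U : {set A}) : 0 < #|U|%:R :> R -> a U * #|U|%:R = \sum_(h in U) f h.
  by move=> hp; rewrite /a divfK // gt_eqF.
have aB (U : {set A}) : 0 < #|U|%:R :> R -> 0 <= a U <= s.
  move=> hp; apply/andP; split.
    by rewrite /a divr_ge0 ?ler0n // sumr_ge0.
  rewrite /a ler_pdivrMr //.
  have -> : s * #|U|%:R = \sum_(h in U) s.
  by rewrite sumr_const mulr_natr.
  by apply: ler_sum.
have dA (U : {set A}) : 0 < #|U|%:R :> R -> density R E S U = a U / s.
  move=> hp; rewrite dens /a; field.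
  by rewrite !gt_eqF.
have hd' : alpha * s <= a U1 - a U0.
  by rewrite -ler_pdivlMr // mulrBl -!dA.
set a0 := a U0. set a1 := a U1.
have hd2 : alpha * s <= a1 - a0 := hd'.
have /andP[a00 a0s] : 0 <= a0 <= s := aB _ n0p.
have /andP[a10 a1s] : 0 <= a1 <= s := aB _ n1p.
pose k := alpha / (2 - alpha).
have hk : k * (2 - alpha) = alpha by rewrite /k divfK // gt_eqF // ; lra.
have k0 : 0 <= k by rewrite /k divr_ge0 //; lra.
pose x := a0. pose y := s - a1.
pose c := k * x + alpha * s / 8%:R.
pose c' := k * y + alpha * s / 8%:R.
have kx : 0 <= k * x by rewrite mulr_ge0.
have ky : 0 <= k * y by rewrite mulr_ge0 // /y subr_ge0.
have as0 : 0 < alpha * s / 8%:R by rewrite divr_gt0 // mulr_gt0.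
have as1 : 0 <= (2 - alpha) * (alpha * s / 8%:R) by rewrite mulr_ge0 //; lra.
have hc : (2 - alpha) * c = alpha * x + (2 - alpha) * (alpha * s / 8%:R).
  by rewrite /c mulrDr mulrA (mulrC (2 - alpha) k) hk.
have hc' : (2 - alpha) * c' = alpha * y + (2 - alpha) * (alpha * s / 8%:R).
  by rewrite /c' mulrDr mulrA (mulrC (2 - alpha) k) hk.
exists S, [set h in U0 | f h <= a0 + c], [set h in U1 | s - f h <= y + c'], (a0 + c), (s - (y + c')).
split => //.
split; first by apply: subset_trans sU0; apply/subsetP => h; rewrite inE => /andP[].
split; first by apply: subset_trans sU1; apply/subsetP => h; rewrite inE => /andP[].
split.
  have hs0 : \sum_(h in U0) f h <= #|U0|%:R * a0 by rewrite -(aE _ n0p) mulrC.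
  have m := @markov A R U0 f a0 c (fun h _ => f0 h) hs0.
  set t := #|[set h in U0 | f h <= a0 + c]|%:R in m *.
  have pc : 0 < a0 + c.
 rewrite /c; move: kx as0 a00; rewrite /x; lra.
  have hac : alpha * (a0 + c) <= 2 * c by move: hc as1; rewrite /x; lra.
  have h1 : alpha * #|U0|%:R <= 2 * t.
    rewrite -(ler_pM2r pc).
    have := ler_wpM2l (ltW n0p) hac. lra.
  nra.
split.
  have g0 h : h \in U1 -> 0 <= s - f h by move=> _; have := fs h; lra.
  have gs : \sum_(h in U1) (s - f h) <= #|U1|%:R * y.
    rewrite sumrB -(aE _ n1p) sumr_const -mulr_natr /y /a1; lra.
  have m := @markov A R U1 (fun h => s - f h) y c' g0 gs.
  set t := #|[set h in U1 | s - f h <= y + c']|%:R in m *.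
  have y0 : 0 <= y by rewrite /y subr_ge0.
  have pc : 0 < y + c' by rewrite /c'; lra.
  have hac : alpha * (y + c') <= 2 * c' by move: hc' as1; lra.
  have h1 : alpha * #|U1|%:R <= 2 * t.
    rewrite -(ler_pM2r pc).
    have := ler_wpM2l (ltW n1p) hac. lra.
  nra.
split.
  have hk2 : k * (1 - alpha) <= alpha / 2 by nra.
  have xy : x + y <= (1 - alpha) * s.
 move: hd2; rewrite /x /y; lra.
  have h1 : k * (x + y) <= k * ((1 - alpha) * s) by apply: ler_wpM2l.
  have h2 : k * ((1 - alpha) * s) <= alpha / 2 * s by rewrite mulrA; apply: ler_wpM2r => //; lra.
  move: h1 h2 hd2; rewrite /c /c' /x /y /s; lra.
split; first by move=> h; rewrite inE => /andP[].
by move=> h; rewrite inE => /andP[_]; rewrite -/(f h); lra.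
Qed.

Theorem claim4 (R : realFieldType) (A B : finType) (E : A -> B -> bool)
  (alpha : R) (T : {set A}) :
  0 < alpha -> alpha < 1 -> separable E alpha T ->
  exists (S : {set B}) (T0 T1 : {set A}) (d0 d1 : R),
    alpha * #|B|%:R <= #|S|%:R /\
        T0 \subset T /\ T1 \subset T /\
        2^-1 * alpha ^+ 2 * #|T|%:R <= #|T0|%:R /\
        2^-1 * alpha ^+ 2 * #|T|%:R <= #|T1|%:R /\
        alpha / 4%:R * #|S|%:R <= d1 - d0 /\
        (forall h, h \in T0 -> (evert E h S)%:R <= d0) /\
        (forall h, h \in T1 -> d1 <= (evert E h S)%:R).
Proof.
move=> ha0 ha1 [S [T0 [T1 [hS [s0 [s1 [_ [n0 [n1 hd]]]]]]]]].
move: hd; rewrite ler_normr => /orP[] hd.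
  by apply: (@key R A B E alpha T S T1 T0 ha0 ha1 hS s1 s0 n1 n0); lra.
by apply: (@key R A B E alpha T S T0 T1 ha0 ha1 hS s0 s1 n0 n1); lra.
Qed.
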